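(* Let $n\ge 2$, $m\ge 1$ and consider a star junction in which pipes $P_1,\dots,P_n$ connect at a single node to pipes $P_{n+1},\dots,P_{n+m}$. Suppose real differentiable functions $p_{j,\ell},p_{j,r},q_{j,\ell},q_{j,r}$ ($j=1,\dots,n+m$) satisfy, for all $t$, \[ \dot p_{j,r}=c_j(q_{j,r}-q_{j,\ell}),\qquad \dot q_{j,\ell}=b_jp_{j,r}+d_jp_{j,\ell}+e_jq_{j,\ell}, \] and the junction constraints $p_{1,r}=\dots=p_{n,r}=p_{n+1,\ell}=\dots=p_{n+m,\ell}$ and $\sum_{k=1}^n q_{k,r}=\sum_{j=n+1}^{n+m}q_{j,\ell}$. Define \[ x=[p_{1,r},p_{n+1,r},\dots,p_{n+m,r},q_{1,\ell},\dots,q_{n+m,\ell}]^\top\in\mathbb R^{n+2m+1},\quad u=[p_{1,\ell},\dots,p_{n,\ell},q_{n+1,r},\dots,q_{n+m,r}]^\top\in\mathbb R^{n+m}, \] \[ y=[p_{n+1,r},\dots,p_{n+m,r},q_{1,\ell},\dots,q_{n,\ell}]^\top\in\mathbb R^{n+m}. \] Then $\dot x=Ax+Bu$, $y=Cx$, where, with row blocks and column blocks of $A$ of sizes $(1,m,n,m)$, \[ A=\begin{bmatrix} 0&\mathbf 0_m^\top&-a\mathbf 1_n^\top&a\mathbf 1_m^\top\\ \mathbf 0_m&\mathbf 0_{m,m}&\mathbf 0_{m,n}&-\operatorname{diag}(c_{n+1},\dots,c_{n+m})\\ (b_1,\dots,b_n)^\top&\mathbf 0_{n,m}&\operatorname{diag}(e_1,\dots,e_n)&\mathbf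 0_{n,m}\\ (d_{n+1},\dots,d_{n+m})^\top&\operatorname{diag}(b_{n+1},\dots,b_{n+m})&\mathbf 0_{m,n}&\operatorname{diag}(e_{n+1},\dots,e_{n+m}) \end{bmatrix}, \] \[ B=\begin{bmatrix} \mathbf 0_n^\top&\mathbf 0_m^\top\\ \mathbf 0_{m,n}&\operatorname{diag}(c_{n+1},\dots,c_{n+m})\\ \operatorname{diag}(d_1,\dots,d_n)&\mathbf 0_{n,m}\\ \mathbf 0_{m,n}&\mathbf 0_{m,m} \end{bmatrix},\qquad C=\begin{bmatrix}\mathbf 0_{n+m}&I_{n+m}&\mathbf 0_{n+m,m}\end{bmatrix}, \] and $a=c_1\left(\sum_{j=1}^n\prod_{i=1,\,i\neq j}^n c_i\right)^{-1}\prod_{i=2}^n c_i$.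
   Context: Linearized isothermal one-dimensional pipe flow model: $p$ pressure, $q$ mass flow, subscripts $\ell,r$ the left ($x=0$) and right ($x=L_j$) ends of pipe $P_j$. Coefficients: $c_j=-\frac{R_sT_0z_0}{A_jL_j}$, $b_j=-\frac{A_j}{L_j}$, $d_j=\frac{A_j}{L_j}+\frac{\lambda_j R_sT_0z_0}{2D_jA_j}\frac{q_{ss,j}|q_{ss,j}|}{p_{\ell,ss,j}^2}-\frac{A_jgh_j}{R_sT_0z_0L_j}$, $e_j=-\frac{\lambda_j R_sT_0z_0}{D_jA_j}\frac{|q_{ss,j}|}{p_{\ell,ss,j}}$, with positive constants $R_s,T_0,z_0$, gravity $g$, and per-pipe area $A_j>0$, length $L_j>0$, diameter $D_j>0$, friction factor $\lambda_j$, elevation difference $h_j$, nominal flow $q_{ss,j}>0$, nominal left pressure $p_{\ell,ss,j}>0$; hence all $c_j<0$. $\mathbf 0_i$, $\mathbf 0_{i,j}$ are zero vectors/matrices (a vector $\mathbf 0_i$ used as a block is a column), $\mathbf 1_i$ the all-ones column vector, $I_k$ the identity. *)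

(* Defs.v *)
From HB Require Import structures.
From mathcomp Require Import all_boot all_order all_algebra.
From mathcomp Require Import all_classical all_reals all_analysis.
Set Implicit Arguments.
Unset Strict Implicit.
Unset Printing Implicit Defensive.
Import Order.TTheory GRing.Theory Num.Theory.
Local Open Scope ring_scope.

(* Pipes are indexed by 'I_(n+m): pipe j (1 <= j <= n) is lshift m (j-1),
   pipe n+j (1 <= j <= m) is rshift n (j-1). *)

Definition coef_c (R : realType) (k : nat) (Rs T0 z0 : R) (A L : 'I_k -> R)
  (j : 'I_k) : R := - (Rs * T0 * z0) / (A j * L j).
Definition coef_b (R : realType) (k : nat) (A L : 'I_k -> R) (j : 'I_k) : R :=
  - (A j / L j).
Definition coef_d (R : realType) (k : nat) (Rs T0 z0 g : R)
  (A L D lam h qss pss : 'I_k -> R) (j : 'I_k) : R :=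
  A j / L j
  + (lam j * Rs * T0 * z0) / (2 * D j * A j) * (qss j * `|qss j|) / (pss j ^+ 2)
  - (A j * g * h j) / (Rs * T0 * z0 * L j).
Definition coef_e (R : realType) (k : nat) (Rs T0 z0 : R)
  (A D lam qss pss : 'I_k -> R) (j : 'I_k) : R :=
  - ((lam j * Rs * T0 * z0) / (D j * A j)) * (`|qss j| / pss j).

Definition pipe1 (n m : nat) (hn : (1 < n)%N) : 'I_(n + m) :=
  lshift m (Ordinal (ltnW hn)).

Definition vderiv (R : realType) (k : nat) (f : R -> 'cV[R]_k) (t : R) : 'cV[R]_k :=
  \col_i (derive1 (fun s => f s i ord0) t).

Definition a_coef (R : realType) (n m : nat) (hn : (1 < n)%N) (c : 'I_(n + m) -> R) : R :=
  c (pipe1 m hn)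
  * (\sum_(j < n) \prod_(i < n | i != j) c (lshift m i))^-1
  * \prod_(i < n | (0 < i)%N) c (lshift m i).

Definition state_x (R : realType) (n m : nat) (hn : (1 < n)%N)
  (p_r q_l : 'I_(n + m) -> R -> R) (t : R) : 'cV[R]_(1 + m + n + m) :=
  col_mx (col_mx (col_mx (const_mx (p_r (pipe1 m hn) t))
                         (\col_(j < m) p_r (rshift n j) t))
                 (\col_(k < n) q_l (lshift m k) t))
         (\col_(j < m) q_l (rshift n j) t).

Definition input_u (R : realType) (n m : nat)
  (p_l q_r : 'I_(n + m) -> R -> R) (t : R) : 'cV[R]_(n + m) :=
  col_mx (\col_(k < n) p_l (lshift m k) t) (\col_(j < m) q_r (rshift n j) t).

Definition output_y (R : realType) (n m : nat)
  (p_r q_l : 'I_(n + m) -> R -> R) (t : R) : 'cV[R]_(m + n) :=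
  col_mx (\col_(j < m) p_r (rshift n j) t) (\col_(k < n) q_l (lshift m k) t).

Definition sysA (R : realType) (n m : nat) (a : R) (b c d e : 'I_(n + m) -> R)
  : 'M[R]_(1 + m + n + m) :=
  let dR f := diag_mx (\row_(j < m) f (rshift n j)) in
  let dL f := diag_mx (\row_(k < n) f (lshift m k)) in
  col_mx (col_mx (col_mx
    (row_mx (row_mx (row_mx (0 : 'M[R]_(1, 1)) (0 : 'M[R]_(1, m)))
                    (const_mx (- a) : 'M[R]_(1, n))) (const_mx a : 'M[R]_(1, m)))
    (row_mx (row_mx (row_mx (0 : 'M[R]_(m, 1)) (0 : 'M[R]_(m, m))) (0 : 'M[R]_(m, n)))
            (- dR c)))
    (row_mx (row_mx (row_mx (\col_(k < n) b (lshift m k)) (0 : 'M[R]_(n, m))) (dL e))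
            (0 : 'M[R]_(n, m))))
    (row_mx (row_mx (row_mx (\col_(j < m) d (rshift n j)) (dR b)) (0 : 'M[R]_(m, n)))
            (dR e)).

Definition sysB (R : realType) (n m : nat) (c d : 'I_(n + m) -> R)
  : 'M[R]_(1 + m + n + m, n + m) :=
  col_mx (col_mx (col_mx
    (row_mx (0 : 'M[R]_(1, n)) (0 : 'M[R]_(1, m)))
    (row_mx (0 : 'M[R]_(m, n)) (diag_mx (\row_(j < m) c (rshift n j)))))
    (row_mx (diag_mx (\row_(k < n) d (lshift m k))) (0 : 'M[R]_(n, m))))
    (row_mx (0 : 'M[R]_(m, n)) (0 : 'M[R]_(m, m))).

Definition sysC (R : realType) (n m : nat) : 'M[R]_(m + n, 1 + (m + n) + m) :=
  row_mx (row_mx (0 : 'M[R]_(m + n,  1)) (1%:M : 'M[R]_(m + n))) (0 : 'M[R]_(m + n,  m)).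

(* Main.v *)
Require Import Defs.
From HB Require Import structures.
From mathcomp Require Import all_boot all_order all_algebra.
From mathcomp Require Import all_classical all_reals all_analysis.
From mathcomp Require Import ring lra.
Import Order.TTheory GRing.Theory Num.Theory.
Local Open Scope ring_scope.

Lemma vderiv_col (R : realType) k1 k2 (G : R -> 'cV[R]_k1) (H : R -> 'cV[R]_k2) t :
  vderiv (fun s => col_mx (G s) (H s)) t = col_mx (vderiv G t) (vderiv H t).
Proof.
apply/matrixP => i j; rewrite (ord1 j); case: (split_ordP i) => k ->; rewrite ?col_mxEu ?col_mxEd /vderiv !mxE.
  by congr derive1; apply: funext => s; rewrite col_mxEu.
by congr derive1; apply: funext => s; rewrite col_mxEd.
Qed.

Lemma vderiv_colf (R : realType) k (f : 'I_k -> R -> R) t :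
  vderiv (fun s => \col_j f j s) t = \col_j derive1 (f j) t.
Proof.
apply/matrixP => i j; rewrite !mxE; congr derive1; apply: funext => s; by rewrite mxE.
Qed.

Lemma vderiv_const (R : realType) (f : R -> R) t :
  vderiv (fun s => (const_mx (f s) : 'cV[R]_1)) t = const_mx (derive1 f t).
Proof.
apply/matrixP => i j; rewrite !mxE; congr derive1; apply: funext => s; by rewrite mxE.
Qed.

Lemma mulC_help (R : realType) m n (x1 : 'cV[R]_1) (x2 : 'cV[R]_m) (x3 : 'cV[R]_n) :
  row_mx (0:'M[R]_(m+n,1)) 1%:M *m (col_mx (col_mx x1 x2) x3 : 'cV_(1+(m+n))) = col_mx x2 x3.
Proof.
apply/matrixP => i j; rewrite (ord1 j) [in LHS]mxE big_split_ord /=.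
rewrite big1 ?add0r; last by move=> k _; rewrite row_mxEl mxE mul0r.
under eq_bigr => k _ do rewrite row_mxEr.
have -> : \sum_(k < m + n) (1%:M : 'M[R]_(m+n)) i k * col_mx (col_mx x1 x2) x3 (rshift 1 k) ord0
   = (1%:M *m (\col_k (col_mx (col_mx x1 x2) x3 (rshift 1 k) ord0))) i ord0.
  by rewrite mxE; apply: eq_bigr => k _; congr (_ * _); rewrite [RHS]mxE.
rewrite mul1mx mxE; case: (split_ordP i) => k ->.
  have -> : rshift 1 (lshift n k) = lshift n (rshift 1 k) :> 'I_(1+m+n) by apply: val_inj.
  by rewrite !col_mxEu col_mxEd.
have -> : rshift 1 (rshift m k) = rshift (1+m) k :> 'I_(1+m+n) by apply: val_inj => /=; rewrite addnA.
by rewrite !col_mxEd.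
Qed.
Theorem corollary4 (R : realType) (n m : nat) (hn : (1 < n)%N) (hm : (0 < m)%N)
  (Rs T0 z0 g : R) (A L D lam h qss pss : 'I_(n + m) -> R)
  (hRs : 0 < Rs) (hT0 : 0 < T0) (hz0 : 0 < z0)
  (hA : forall j, 0 < A j) (hL : forall j, 0 < L j) (hD : forall j, 0 < D j)
  (hqss : forall j, 0 < qss j) (hpss : forall j, 0 < pss j)
  (p_l p_r q_l q_r : 'I_(n + m) -> R -> R)
  (dp_l : forall j t, derivable (p_l j) t 1)
  (dp_r : forall j t, derivable (p_r j) t 1)
  (dq_l : forall j t, derivable (q_l j) t 1)
  (dq_r : forall j t, derivable (q_r j) t 1)
  (ode_p : forall j t,
     derive1 (p_r j) t = coef_c Rs T0 z0 A L j * (q_r j t - q_l j t))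
  (ode_q : forall j t,
     derive1 (q_l j) t = coef_b A L j * p_r j t
                     + coef_d Rs T0 z0 g A L D lam h qss pss j * p_l j t
                     + coef_e Rs T0 z0 A D lam qss pss j * q_l j t)
  (junc_p1 : forall t (k : 'I_n), p_r (lshift m k) t = p_r (pipe1 m hn) t)
  (junc_p2 : forall t (j : 'I_m), p_l (rshift n j) t = p_r (pipe1 m hn) t)
  (junc_q : forall t, \sum_(k < n) q_r (lshift m k) t = \sum_(j < m) q_l (rshift n j) t) :
  let c := coef_c Rs T0 z0 A L in
  let b := coef_b A L in
  let d := coef_d Rs T0 z0 g A L D lam h qss pss in
  let e := coef_e Rs T0 z0 A D lam qss pss in
  let a := a_coef hn c in
  let x := state_x hn p_r q_l in
  let u := input_u p_l q_r in
  let y := output_y p_r q_l in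
  forall t : R,
    vderiv x t = sysA a b c d e *m x t + sysB c d *m u t
    /\ y t = sysC R n m *m x t.
Proof.
move=> c b d e a x u y t.
split; last first.
  by rewrite /y /x /output_y /state_x /sysC mul_row_col mul0mx addr0 mulC_help.
rewrite /x /u /state_x /input_u /sysA /sysB.
rewrite !vderiv_col vderiv_const !vderiv_colf.
rewrite !mul_col_mx !mul_row_col !mul0mx ?add0r ?addr0 !add_col_mx ?add0r ?addr0.
have cneg : forall j, c j < 0.
  move=> j; rewrite /c /coef_c mulNr oppr_lt0 divr_gt0 // ?mulr_gt0 //.
have cnz : forall j, c j != 0 by move=> j; exact: ltr0_neq0 (cneg j).
pose i0 : 'I_n := Ordinal (ltnW hn).
pose S := \sum_(k < n) (c (lshift m k))^-1.
pose P := \prod_(k < n) c (lshift m k).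
have Sneg : S < 0.
  rewrite /S (bigD1 i0) //=.
  have h0 : (c (lshift m i0))^-1 < 0 by rewrite invr_lt0.
  have h1 : \sum_(k < n | k != i0) (c (lshift m k))^-1 <= 0.
    by apply: sumr_le0 => k _; rewrite invr_le0 ltW.
  lra.
have Snz : S != 0 by exact: ltr0_neq0 Sneg.
have Pnz : P != 0 by apply/prodf_neq0 => k _.
have h1 : c (pipe1 m hn) * \prod_(k < n | (0 < k)%N) c (lshift m k) = P.
  rewrite /P [RHS](bigD1 i0) //=; congr (_ * _); apply: eq_bigl => k /=.
  by rewrite lt0n -val_eqE.
have h2 : \sum_(j < n) \prod_(k < n | k != j) c (lshift m k) = P * S.
  rewrite /S mulr_sumr; apply: eq_bigr => j _; rewrite /P [in RHS](bigD1 j) //=.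
  by rewrite mulrAC divff ?mul1r.
have ha : a = S^-1.
  by rewrite /a /a_coef h2 mulrAC h1 invfM mulrA divff // mul1r.
have hder : forall k, derive1 (p_r (lshift m k)) t = derive1 (p_r (pipe1 m hn)) t.
  by move=> k; congr derive1; apply: funext => s; rewrite junc_p1.
have hqr : forall k, q_r (lshift m k) t
    = q_l (lshift m k) t + derive1 (p_r (pipe1 m hn)) t * (c (lshift m k))^-1.
  move=> k; rewrite -(hder k) ode_p mulrAC (divff (cnz _)) mul1r.
  by rewrite addrC subrK.
have key : derive1 (p_r (pipe1 m hn)) t =
   a * (\sum_(j < m) q_l (rshift n j) t - \sum_(k < n) q_l (lshift m k) t).
  rewrite -junc_q; under eq_bigr => k _ do rewrite hqr.
  by rewrite big_split /= -mulr_sumr -/S ha addrC addrK mulrC -mulrA divff // mulr1.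
congr col_mx; [congr col_mx; [congr col_mx|] |].
- apply/matrixP => i j; rewrite !mxE key.
  under [X in _ = X + _]eq_bigr do rewrite !mxE.
  under [X in _ = _ + X]eq_bigr do rewrite !mxE.
  rewrite -!mulr_sumr; ring.
- rewrite mulNmx !mul_diag_mx; apply/matrixP => i j; rewrite !mxE ode_p.
  rewrite /c; ring.
- rewrite !mul_diag_mx; apply/matrixP => i j; rewrite !mxE !big_ord1 !mxE ode_q junc_p1.
  rewrite /b /d /e; ring.
- rewrite !mul_diag_mx; apply/matrixP => i j; rewrite !mxE !big_ord1 !mxE ode_q junc_p2.
  rewrite /b /d /e; ring.
Qed.
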